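(* Let $f:[0,1]\to\mathbb{R}$ and $g:[0,1]\to\mathbb{R}$ be (sufficiently regular) scalar functions and consider the linear SDE $dx = f(t)\,x\,dt + g(t)\,dw$ on $\mathbb{R}^d$, $t\in[0,1]$. Define $$\alpha_t = e^{\int_0^t f(\tau)\,d\tau},\quad \bar\alpha_t = e^{-\int_t^1 f(\tau)\,d\tau},\quad \sigma_t^2=\int_0^t \frac{g^2(\tau)}{\alpha_\tau^2}\,d\tau,\quad \bar\sigma_t^2=\int_t^1 \frac{g^2(\tau)}{\alpha_\tau^2}\,d\tau .$$ Fix $x_0,x_1\in\mathbb{R}^d$ and $\epsilon>0$, and let $p_{\text{target}}=\mathcal{N}(x_0,\epsilon^2 I)$ and $p_{\text{initial}}=\mathcal{N}(x_1,\alpha_1^2\epsilon^2 I)$. Set $$\sigma^2=\epsilon^2+\frac{\sqrt{\sigma_1^4+4\epsilon^4}-\sigma_1^2}{2},\qquad a = x_0+\frac{\sigma^2}{\sigma_1^2}\Big(x_0-\frac{x_1}{\alpha_1}\Big),\qquad b = x_1+\frac{\sigma^2}{\sigma_1^2}\big(x_1-\alpha_1 x_0\big).$$ Then the functions $$\widehat{\Psi}_t^{\epsilon}=\mathcal{N}\big(\alpha_t a,\ (\alpha_t^2\sigma^2+\alpha_t^2\sigma_t^2)I\big),\qquad \Psi_t^{\epsilon}=\mathcal{N}\big(\bar\alpha_t b,\ (\alpha_t^2\sigma^2+\alpha_t^2\bar\sigma_t^2)I\big),\qquad t\in[0,1],$$ solve the Schrödinger bridge system $$\frac{\partial \Psi}{\partial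 t}=-\nabla_x\Psi^{\top} (f(t)x)-\tfrac12\operatorname{Tr}\!\big(g(t)^2\nabla_x^2\Psi\big),\qquad \frac{\partial \widehat\Psi}{\partial t}=-\nabla_x\cdot\big(\widehat\Psi\, f(t)x\big)+\tfrac12\operatorname{Tr}\!\big(g(t)^2\nabla_x^2\widehat\Psi\big),$$ subject to $\Psi_0\widehat\Psi_0=p_{\text{target}}$ and $\Psi_1\widehat\Psi_1=p_{\text{initial}}$. Moreover, as $\epsilon\to 0$, $\widehat\Psi_t^{\epsilon}$ and $\Psi_t^{\epsilon}$ converge to $$\widehat\Psi_t=\mathcal{N}\big(\alpha_t x_0,\ \alpha_t^2\sigma_t^2 I\big),\qquad \Psi_t=\mathcal{N}\big(\bar\alpha_t x_1,\ \alpha_t^2\bar\sigma_t^2 I\big).$$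
   Context: $\mathcal{N}(\mu,\Sigma)$ denotes the Gaussian density with mean $\mu$ and covariance $\Sigma$; as usual for Schrödinger bridge potentials, $\Psi,\widehat\Psi$ are understood up to positive multiplicative constants, so the boundary identities $\Psi_0\widehat\Psi_0=p_{\text{target}}$, $\Psi_1\widehat\Psi_1=p_{\text{initial}}$ are equalities of densities after normalization. $w$ is a standard Brownian motion on $\mathbb{R}^d$ and $I$ the $d\times d$ identity. *)

(* Defs.v *)
From Stdlib Require Import Reals List.
From Coquelicot Require Import Coquelicot.
Open Scope R_scope.

(* Vectors of R^d are represented as functions nat -> R; only the
   coordinates i < d are ever used. *)
Definition vec := nat -> R.

Definition fsum (d : nat) (u : nat -> R) : R :=
  fold_right Rplus 0 (map u (seq 0 d)).

Definition vadd (x y : vec) : vec := fun i => x i + y i.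
Definition vsub (x y : vec) : vec := fun i => x i - y i.
Definition vscale (c : R) (x : vec) : vec := fun i => c * x i.

Definition upd (x : vec) (i : nat) (h : R) : vec :=
  fun j => if Nat.eqb j i then h else x j.

Definition sqnorm (d : nat) (x : vec) : R := fsum d (fun i => x i ^ 2).

Definition gauss (d : nat) (m : vec) (v : R) (x : vec) : R :=
  / Rpower (2 * PI * v) (INR d / 2) * exp (- sqnorm d (vsub x m) / (2 * v)).

Definition slice (F : vec -> R) (x : vec) (i : nat) : R -> R :=
  fun h => F (upd x i h).

Definition partial (F : vec -> R) (i : nat) (x : vec) : R :=
  Derive (slice F x i) (x i).
Definition partial2 (F : vec -> R) (i : nat) (x : vec) : R :=
  Derive_n (slice F x i) 2 (x i).

Definition solves_backward (d : nat) (f g : R -> R) (Psi : R -> vec -> R) : Prop :=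
  forall t, 0 < t < 1 -> forall x : vec,
    ex_derive (fun s => Psi s x) t /\
    (forall i, (i < d)%nat -> ex_derive_n (slice (Psi t) x i) 2 (x i)) /\
    Derive (fun s => Psi s x) t =
      - fsum d (fun i => partial (Psi t) i x * (f t * x i))
      - / 2 * fsum d (fun i => g t ^ 2 * partial2 (Psi t) i x).

Definition solves_forward (d : nat) (f g : R -> R) (Psih : R -> vec -> R) : Prop :=
  forall t, 0 < t < 1 -> forall x : vec,
    ex_derive (fun s => Psih s x) t /\
    (forall i, (i < d)%nat -> ex_derive_n (slice (Psih t) x i) 2 (x i)) /\
    (forall i, (i < d)%nat ->
       ex_derive (slice (fun y => Psih t y * (f t * y i)) x i) (x i)) /\
    Derive (fun s => Psih s x) t =
      - fsum d (fun i => partial (fun y => Psih t y * (f t * y i)) i x)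
      + / 2 * fsum d (fun i => g t ^ 2 * partial2 (Psih t) i x).

Definition alpha (f : R -> R) (t : R) : R := exp (RInt f 0 t).
Definition alphabar (f : R -> R) (t : R) : R := exp (- RInt f t 1).
Definition sig2 (f g : R -> R) (t : R) : R :=
  RInt (fun s => g s ^ 2 / alpha f s ^ 2) 0 t.
Definition sigbar2 (f g : R -> R) (t : R) : R :=
  RInt (fun s => g s ^ 2 / alpha f s ^ 2) t 1.

Definition sigma2 (f g : R -> R) (eps : R) : R :=
  eps ^ 2 + (sqrt (sig2 f g 1 ^ 2 + 4 * eps ^ 4) - sig2 f g 1) / 2.
Definition avec (f g : R -> R) (x0 x1 : vec) (eps : R) : vec :=
  vadd x0 (vscale (sigma2 f g eps / sig2 f g 1)
                  (vsub x0 (vscale (/ alpha f 1) x1))).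
Definition bvec (f g : R -> R) (x0 x1 : vec) (eps : R) : vec :=
  vadd x1 (vscale (sigma2 f g eps / sig2 f g 1)
                  (vsub x1 (vscale (alpha f 1) x0))).

Definition PsihatE (d : nat) (f g : R -> R) (x0 x1 : vec) (eps t : R) : vec -> R :=
  gauss d (vscale (alpha f t) (avec f g x0 x1 eps))
    (alpha f t ^ 2 * sigma2 f g eps + alpha f t ^ 2 * sig2 f g t).
Definition PsiE (d : nat) (f g : R -> R) (x0 x1 : vec) (eps t : R) : vec -> R :=
  gauss d (vscale (alphabar f t) (bvec f g x0 x1 eps))
    (alpha f t ^ 2 * sigma2 f g eps + alpha f t ^ 2 * sigbar2 f g t).

Definition Psihat0 (d : nat) (f g : R -> R) (x0 : vec) (t : R) : vec -> R :=
  gauss d (vscale (alpha f t) x0) (alpha f t ^ 2 * sig2 f g t).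
Definition Psi0 (d : nat) (f g : R -> R) (x1 : vec) (t : R) : vec -> R :=
  gauss d (vscale (alphabar f t) x1) (alpha f t ^ 2 * sigbar2 f g t).

(* Main.v *)
Require Import Defs.
From Stdlib Require Import Reals.
From Coquelicot Require Import Coquelicot.
Open Scope R_scope.
From Stdlib Require Import Lra Lia FunctionalExtensionality List.

Lemma fsum_S d u : fsum (S d) u = fsum d u + u d.
Proof.
  unfold fsum. rewrite seq_S, map_app, fold_right_app. simpl.
  generalize (u d). induction (map u (seq 0 d)); simpl; intros; [ring|].
  rewrite IHl. ring.
Qed.

Lemma fsum_0 u : fsum 0 u = 0.
Proof. reflexivity. Qed.

Lemma fsum_ext d u w : (forall i, (i < d)%nat -> u i = w i) -> fsum d u = fsum d w.
Proof.
  induction d; intros H; [reflexivity|].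
  rewrite !fsum_S, IHd, H; auto; intros; apply H; lia.
Qed.

Lemma fsum_lin3 d a b c u w :
  fsum d (fun i => a + b * u i + c * w i) = INR d * a + b * fsum d u + c * fsum d w.
Proof.
  induction d; [simpl; unfold fsum; simpl; ring|].
  rewrite !fsum_S, IHd, S_INR. ring.
Qed.

Lemma fsum_lin2 d b c u w :
  fsum d (fun i => b * u i + c * w i) = b * fsum d u + c * fsum d w.
Proof.
  induction d; [unfold fsum; simpl; ring|].
  rewrite !fsum_S, IHd. ring.
Qed.

Lemma fsum_upd d i (u : nat -> R) a : (i < d)%nat ->
  fsum d (fun j => if Nat.eqb j i then a else u j) = fsum d u - u i + a.
Proof.
  induction d; intros H; [lia|].
  rewrite !fsum_S. destruct (Nat.eq_dec i d).
  - subst. rewrite Nat.eqb_refl.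
    rewrite (fsum_ext d _ u). ring. intros j Hj.
    destruct (Nat.eqb_spec j d); [lia|auto].
  - rewrite IHd by lia. destruct (Nat.eqb_spec d i); [lia|]. ring.
Qed.

Lemma is_derive_fsum d (u : R -> nat -> R) u' t :
  (forall i, (i < d)%nat -> is_derive (fun s => u s i) t (u' i)) ->
  is_derive (fun s => fsum d (u s)) t (fsum d u').
Proof.
  induction d; intros H.
  - unfold fsum; simpl. apply (is_derive_const 0).
  - rewrite fsum_S. 
    apply (is_derive_ext (fun s => fsum d (u s) + u s d)).
    { intros; rewrite fsum_S; auto. }
    apply (is_derive_plus (fun s => fsum d (u s)) (fun s => u s d)).
    + apply IHd; intros; apply H; lia.
    + apply H; lia.
Qed.

Lemma continuous_fsum d (u : R -> nat -> R) t :
  (forall i, (i < d)%nat -> continuous (fun s => u s i) t) ->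
  continuous (fun s => fsum d (u s)) t.
Proof.
  induction d; intros H.
  - unfold fsum; simpl. apply continuous_const.
  - apply (continuous_ext (fun s => fsum d (u s) + u s d)).
    { intros; rewrite fsum_S; auto. }
    apply (continuous_plus (fun s => fsum d (u s)) (fun s => u s d)).
    + apply IHd; intros; apply H; lia.
    + apply H; lia.
Qed.

Lemma fsum_scal d c u : fsum d (fun i => c * u i) = c * fsum d u.
Proof. induction d; [unfold fsum; simpl; ring|]. rewrite !fsum_S, IHd. ring. Qed.

Lemma fsum_opp d u : fsum d (fun i => - u i) = - fsum d u.
Proof. induction d; [unfold fsum; simpl; ring|]. rewrite !fsum_S, IHd. ring. Qed.

Ltac nrm := unfold Rdiv, Rminus; simpl pow; repeat rewrite ?Rmult_1_r, ?Rmult_1_l.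

Lemma is_derive_eq (f : R -> R) x l l' : is_derive f x l -> l = l' -> is_derive f x l'.
Proof. intros H <-; auto. Qed.

Definition q1 (K mu C V h : R) := exp (K + - ((h - mu)^2 + C) / (2 * V)).

Lemma q1_d K mu C V h : V <> 0 -> is_derive (q1 K mu C V) h (q1 K mu C V h * (-(h - mu) / V)).
Proof.
  intros HV. unfold q1. auto_derive; [auto|]. nrm. field. auto.
Qed.

Lemma q1_D K mu C V : V <> 0 -> Derive (q1 K mu C V) = fun h => q1 K mu C V h * (-(h - mu) / V).
Proof.
  intros HV. apply functional_extensionality; intro h. apply is_derive_unique, q1_d; auto.
Qed.

Lemma q1_dd K mu C V h : V <> 0 ->
  is_derive (fun h => q1 K mu C V h * (-(h - mu) / V)) h (q1 K mu C V h * ((h - mu)^2 / V^2 - 1 / V)).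
Proof.
  intros HV. unfold q1. auto_derive; [auto|]. nrm. field. auto.
Qed.

Lemma q1_dm K mu C V c h : V <> 0 ->
  is_derive (fun h => q1 K mu C V h * (c * h)) h (c * q1 K mu C V h + c * h * (q1 K mu C V h * (-(h - mu) / V))).
Proof.
  intros HV. unfold q1. auto_derive; [auto|]. nrm. field. auto.
Qed.

Definition Phi d (L : R -> R) (m : R -> vec) (v : R -> R) (t : R) (x : vec) : R :=
  exp (L t + - sqnorm d (vsub x (m t)) / (2 * v t)).

Lemma Phi_slice d L m v t x i : (i < d)%nat ->
  slice (Phi d L m v t) x i =
  q1 (L t) (m t i) (sqnorm d (vsub x (m t)) - (x i - m t i)^2) (v t).
Proof.
  intros Hi. apply functional_extensionality; intro h.
  unfold slice, Phi, q1, sqnorm.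
  rewrite (fsum_ext d _ (fun j => if Nat.eqb j i then (h - m t i)^2 else (vsub x (m t) j)^2)).
  - rewrite fsum_upd by auto. unfold vsub. f_equal. f_equal. f_equal. ring.
  - intros j Hj. unfold vsub, upd. destruct (Nat.eqb_spec j i); subst; auto.
Qed.

Lemma q1_at d L m v t x i :
  q1 (L t) (m t i) (sqnorm d (vsub x (m t)) - (x i - m t i)^2) (v t) (x i) = Phi d L m v t x.
Proof.
  unfold q1, Phi. f_equal. f_equal. f_equal. ring.
Qed.

Lemma Phi_partial d L m v t x i : (i < d)%nat -> v t <> 0 ->
  partial (Phi d L m v t) i x = Phi d L m v t x * (-(x i - m t i) / v t).
Proof.
  intros Hi Hv. unfold partial. rewrite Phi_slice by auto.
  rewrite (is_derive_unique _ _ _ (q1_d _ _ _ _ _ Hv)). rewrite q1_at. auto.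
Qed.

Lemma Phi_partial2 d L m v t x i : (i < d)%nat -> v t <> 0 ->
  partial2 (Phi d L m v t) i x = Phi d L m v t x * ((x i - m t i)^2 / v t ^2 - 1 / v t).
Proof.
  intros Hi Hv. unfold partial2. rewrite Phi_slice by auto.
  simpl. rewrite q1_D by auto.
  rewrite (is_derive_unique _ _ _ (q1_dd _ _ _ _ _ Hv)). rewrite q1_at. auto.
Qed.

Lemma Phi_exn d L m v t x i : (i < d)%nat -> v t <> 0 ->
  ex_derive_n (slice (Phi d L m v t) x i) 2 (x i).
Proof.
  intros Hi Hv. rewrite Phi_slice by auto. simpl. rewrite q1_D by auto.
  eexists. apply q1_dd; auto.
Qed.

Lemma Phi_slice_m d L m v t x i c : (i < d)%nat ->
  slice (fun y => Phi d L m v t y * (c * y i)) x i =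
  (fun h => q1 (L t) (m t i) (sqnorm d (vsub x (m t)) - (x i - m t i)^2) (v t) h * (c * h)).
Proof.
  intros Hi. apply functional_extensionality; intro h.
  unfold slice. rewrite <- (Phi_slice d L m v t x i Hi). unfold slice, upd.
  rewrite Nat.eqb_refl. auto.
Qed.

Lemma Phi_partial_m d L m v t x i c : (i < d)%nat -> v t <> 0 ->
  partial (fun y => Phi d L m v t y * (c * y i)) i x =
  c * Phi d L m v t x + c * x i * (Phi d L m v t x * (-(x i - m t i) / v t)).
Proof.
  intros Hi Hv. unfold partial. rewrite Phi_slice_m by auto.
  rewrite (is_derive_unique _ _ _ (q1_dm _ _ _ _ c _ Hv)). rewrite q1_at. auto.
Qed.

Lemma Phi_ex_m d L m v t x i c : (i < d)%nat -> v t <> 0 ->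
  ex_derive (slice (fun y => Phi d L m v t y * (c * y i)) x i) (x i).
Proof.
  intros Hi Hv. rewrite Phi_slice_m by auto. eexists. apply q1_dm; auto.
Qed.

Lemma Phi_dt d L m v t x L' m' v' : 
  is_derive L t L' -> (forall i, is_derive (fun s => m s i) t (m' i)) -> is_derive v t v' -> v t <> 0 ->
  is_derive (fun s => Phi d L m v s x) t
   (Phi d L m v t x * (L' + (fsum d (fun i => 2 * (x i - m t i) * m' i) * (2 * v t)
       + sqnorm d (vsub x (m t)) * (2 * v')) / (2 * v t)^2)).
Proof.
  intros HL Hm Hv Hv0. unfold Phi.
  assert (HS : is_derive (fun s => sqnorm d (vsub x (m s))) t (fsum d (fun i => 2 * (x i - m t i) * - m' i))).
  { unfold sqnorm. apply is_derive_fsum. intros i _. unfold vsub.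
    apply (is_derive_ext (fun s => (x i - m s i) ^ 2)); auto.
    eapply is_derive_eq. 
    - apply (is_derive_pow (fun s => x i - m s i) 2). 
      apply (is_derive_minus (fun _ => x i) (fun s => m s i)); [apply is_derive_const|apply Hm].
    - simpl. unfold minus, plus, opp, zero; simpl. ring. }
  eapply is_derive_eq.
  - apply (is_derive_comp exp (fun s => L s + - sqnorm d (vsub x (m s)) / (2 * v s))).
    + apply is_derive_exp.
    + apply (is_derive_plus L). apply HL.
      apply is_derive_div.
      * apply (is_derive_opp (fun s => sqnorm d (vsub x (m s)))). apply HS.
      * apply (is_derive_scal v). apply Hv.
      * lra.
  - simpl. unfold plus, scal, opp; simpl. unfold mult; simpl.
    rewrite (fsum_ext d _ (fun i => - (2 * (x i - m t i) * m' i))) by (intros; ring).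
    rewrite fsum_opp. field. auto.
Qed.

Lemma back_Phi d f g L m v :
 (forall t, 0 < t < 1 -> 0 < v t /\ is_derive L t (INR d * (g t ^ 2 / (2 * v t))) /\
    (forall i, is_derive (fun s => m s i) t (f t * m t i)) /\
    is_derive v t (2 * f t * v t - g t ^ 2)) ->
 solves_backward d f g (fun t x => Phi d L m v t x).
Proof.
  intros H t Ht x. destruct (H t Ht) as (Hv & HL & Hm & Hvd).
  assert (Hv0 : v t <> 0) by lra.
  pose proof (Phi_dt d L m v t x _ (fun i => f t * m t i) _ HL Hm Hvd Hv0) as Hd.
  split; [eexists; exact Hd|].
  split; [intros i Hi; apply Phi_exn; auto|].
  rewrite (is_derive_unique (fun s : R => Phi d L m v s x) t _ Hd).
  rewrite (fsum_ext d (fun i => partial _ i x * _) (fun i => Phi d L m v t x * (-(x i - m t i) / v t) * (f t * x i)))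
    by (intros; rewrite Phi_partial; auto).
  rewrite (fsum_ext d (fun i => g t ^ 2 * partial2 _ i x) (fun i => g t ^ 2 * (Phi d L m v t x * ((x i - m t i)^2 / v t ^2 - 1 / v t))))
    by (intros; rewrite Phi_partial2; auto).
  set (P := Phi d L m v t x).
  transitivity (fsum d (fun i => P * (g t ^ 2 / (2 * v t)) + (P * (2 * v t) / (2 * v t)^2) * (2 * (x i - m t i) * (f t * m t i))
      + (P * (2 * (2 * f t * v t - g t ^ 2)) / (2 * v t)^2) * (vsub x (m t) i ^ 2))).
  - rewrite fsum_lin3. unfold sqnorm. field. auto.
  - transitivity (fsum d (fun i => (-1) * (P * (-(x i - m t i) / v t) * (f t * x i)) + (- / 2) * (g t ^ 2 * (P * ((x i - m t i)^2 / v t ^2 - 1 / v t))))).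
    + apply fsum_ext; intros. unfold vsub. field. auto.
    + rewrite fsum_lin2. ring.
Qed.

Lemma fwd_Phi d f g L m v :
 (forall t, 0 < t < 1 -> 0 < v t /\ is_derive L t (INR d * (- f t - g t ^ 2 / (2 * v t))) /\
    (forall i, is_derive (fun s => m s i) t (f t * m t i)) /\
    is_derive v t (2 * f t * v t + g t ^ 2)) ->
 solves_forward d f g (fun t x => Phi d L m v t x).
Proof.
  intros H t Ht x. destruct (H t Ht) as (Hv & HL & Hm & Hvd).
  assert (Hv0 : v t <> 0) by lra.
  pose proof (Phi_dt d L m v t x _ (fun i => f t * m t i) _ HL Hm Hvd Hv0) as Hd.
  split; [eexists; exact Hd|].
  split; [intros i Hi; apply Phi_exn; auto|].
  split; [intros i Hi; apply Phi_ex_m; auto|].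
  rewrite (is_derive_unique (fun s : R => Phi d L m v s x) t _ Hd).
  rewrite (fsum_ext d (fun i => partial _ i x) (fun i => f t * Phi d L m v t x + f t * x i * (Phi d L m v t x * (-(x i - m t i) / v t))))
    by (intros; rewrite Phi_partial_m; auto).
  rewrite (fsum_ext d (fun i => g t ^ 2 * partial2 _ i x) (fun i => g t ^ 2 * (Phi d L m v t x * ((x i - m t i)^2 / v t ^2 - 1 / v t))))
    by (intros; rewrite Phi_partial2; auto).
  set (P := Phi d L m v t x).
  transitivity (fsum d (fun i => P * (- f t - g t ^ 2 / (2 * v t)) + (P * (2 * v t) / (2 * v t)^2) * (2 * (x i - m t i) * (f t * m t i))
      + (P * (2 * (2 * f t * v t + g t ^ 2)) / (2 * v t)^2) * (vsub x (m t) i ^ 2))).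
  - rewrite fsum_lin3. unfold sqnorm. field. auto.
  - transitivity (fsum d (fun i => (-1) * (f t * P + f t * x i * (P * (-(x i - m t i) / v t))) + (/ 2) * (g t ^ 2 * (P * ((x i - m t i)^2 / v t ^2 - 1 / v t))))).
    + apply fsum_ext; intros. unfold vsub. field. auto.
    + rewrite fsum_lin2. ring.
Qed.

Lemma continuous_ext_R (f g : R -> R) x : (forall y, f y = g y) -> continuous f x -> continuous g x.
Proof. apply continuous_ext. Qed.

Lemma ex_derive_cont_R (f : R -> R) x : ex_derive f x -> continuous f x.
Proof. apply (@ex_derive_continuous R_AbsRing R_NormedModule). Qed.

Definition cl (s : R) : R := (Rabs s - Rabs (s - 1) + 1) / 2.

Lemma cl_id s : 0 <= s <= 1 -> cl s = s.
Proof.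
  intros H. unfold cl. rewrite Rabs_right by lra. rewrite Rabs_left1 by lra. field.
Qed.

Lemma cl_range s : 0 <= cl s <= 1.
Proof.
  unfold cl. destruct (Rle_dec 0 s); destruct (Rle_dec 1 s).
  - rewrite Rabs_right by lra. rewrite (Rabs_right (s-1)) by lra. lra.
  - rewrite Rabs_right by lra. rewrite (Rabs_left1 (s-1)) by lra. lra.
  - lra.
  - rewrite Rabs_left1 by lra. rewrite (Rabs_left1 (s-1)) by lra. lra.
Qed.

Lemma cl_cont s : continuous cl s.
Proof.
  unfold cl.
  apply (continuous_ext_R (fun s => (/2) * (Rabs s + (- Rabs (s - 1) + 1)))).
  { intros; field. }
  apply (continuous_mult (fun _ => /2) (fun s => Rabs s + (- Rabs (s - 1) + 1))).
  apply continuous_const.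
  apply (continuous_plus Rabs (fun s => - Rabs (s - 1) + 1)). apply continuous_Rabs.
  apply (continuous_plus (fun s => - Rabs (s - 1)) (fun _ => 1)); [|apply continuous_const].
  apply (continuous_opp (fun s => Rabs (s - 1))).
  apply (continuous_comp (fun s => s - 1) Rabs). 2: apply continuous_Rabs.
  apply (continuous_plus (fun s => s) (fun _ => -1)). apply continuous_id. apply continuous_const.
Qed.

Section Conc.
Variables (f g : R -> R).
Hypothesis hf : forall t, 0 <= t <= 1 -> continuous f t.
Hypothesis hg : forall t, 0 <= t <= 1 -> continuous g t.

Definition fc (s : R) := f (cl s).
Lemma fc_cont s : continuous fc s.
Proof. apply (continuous_comp cl f). apply cl_cont. apply hf, cl_range. Qed.
Lemma fc_ex a b : ex_RInt fc a b.
Proof. apply (@ex_RInt_continuous R_CompleteNormedModule). intros; apply fc_cont. Qed.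

Definition Fi (s : R) := RInt fc 0 s.
Lemma Fi_d s : is_derive Fi s (fc s).
Proof.
  apply (is_derive_RInt fc Fi 0). apply filter_forall. intros; apply (@RInt_correct R_CompleteNormedModule), fc_ex. apply fc_cont.
Qed.
Lemma Fi_cont s : continuous Fi s.
Proof. apply ex_derive_cont_R. eexists; apply Fi_d. Qed.

Lemma sub01 a b x : 0 <= a <= 1 -> 0 <= b <= 1 -> Rmin a b < x < Rmax a b -> 0 <= x <= 1.
Proof.
  intros Ha Hb H. unfold Rmin, Rmax in H. destruct (Rle_dec a b); lra.
Qed.

Lemma RInt_f_fc a b : 0 <= a <= 1 -> 0 <= b <= 1 -> RInt f a b = RInt fc a b.
Proof.
  intros Ha Hb. apply RInt_ext. intros x Hx. unfold fc. rewrite cl_id; auto.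
  eapply sub01; [exact Ha|exact Hb|exact Hx].
Qed.

Definition hc (s : R) := g (cl s) * g (cl s) * exp (-2 * Fi (cl s)).

Lemma hc_cont s : continuous hc s.
Proof.
  unfold hc.
  apply (continuous_mult (fun s => g (cl s) * g (cl s)) (fun s => exp (-2 * Fi (cl s)))).
  - apply (continuous_mult (fun s => g (cl s)) (fun s => g (cl s)));
    apply (continuous_comp cl g); [apply cl_cont|apply hg, cl_range|apply cl_cont|apply hg, cl_range].
  - apply (continuous_comp (fun s => -2 * Fi (cl s)) exp).
    + apply (continuous_mult (fun _ => -2) (fun s => Fi (cl s))). apply continuous_const.
      apply (continuous_comp cl Fi). apply cl_cont. apply Fi_cont.
    + apply ex_derive_cont_R. eexists; apply is_derive_exp.
Qed.
Lemma hc_ex a b : ex_RInt hc a b.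
Proof. apply (@ex_RInt_continuous R_CompleteNormedModule). intros; apply hc_cont. Qed.
Lemma hc_pos s : 0 <= hc s.
Proof.
  unfold hc. apply Rmult_le_pos. apply Rle_0_sqr. left; apply exp_pos.
Qed.

Lemma alpha_eq s : 0 <= s <= 1 -> alpha f s = exp (Fi s).
Proof. intros H. unfold alpha, Fi. rewrite RInt_f_fc; auto; lra. Qed.

Lemma alpha_pos s : 0 < alpha f s.
Proof. unfold alpha; apply exp_pos. Qed.

Lemma h_eq s : 0 <= s <= 1 -> g s ^ 2 / alpha f s ^ 2 = hc s.
Proof.
  intros H. unfold hc. rewrite cl_id by auto. rewrite alpha_eq by auto.
  replace (-2 * Fi s) with (- (Fi s + Fi s)) by ring. rewrite exp_Ropp, exp_plus.
  field. apply Rgt_not_eq, exp_pos.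
Qed.

Lemma sig2_eq s : 0 <= s <= 1 -> sig2 f g s = RInt hc 0 s.
Proof.
  intros H. unfold sig2. apply RInt_ext. intros x Hx. apply h_eq. eapply sub01; [| |eauto]; lra.
Qed.
Lemma sigbar2_eq s : 0 <= s <= 1 -> sigbar2 f g s = RInt hc s 1.
Proof.
  intros H. unfold sigbar2. apply RInt_ext. intros x Hx. apply h_eq. eapply sub01; [| |eauto]; lra.
Qed.
Lemma sig2_pos s : 0 <= s <= 1 -> 0 <= sig2 f g s.
Proof.
  intros H. rewrite sig2_eq by auto. apply RInt_ge_0; [lra|apply hc_ex|intros; apply hc_pos].
Qed.
Lemma sigbar2_pos s : 0 <= s <= 1 -> 0 <= sigbar2 f g s.
Proof.
  intros H. rewrite sigbar2_eq by auto. apply RInt_ge_0; [lra|apply hc_ex|intros; apply hc_pos].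
Qed.

Lemma loc01 t (P : R -> Prop) : 0 < t < 1 -> (forall s, 0 < s < 1 -> P s) -> locally t P.
Proof.
  intros Ht HP. apply (locally_interval _ t 0 1); simpl; try lra.
  intros; apply HP; lra.
Qed.

Lemma D_alpha t : 0 < t < 1 -> is_derive (alpha f) t (f t * alpha f t).
Proof.
  intros Ht. apply (is_derive_ext_loc (fun s => exp (Fi s))).
  { apply loc01; auto. intros; rewrite alpha_eq; auto; lra. }
  eapply is_derive_eq. apply (is_derive_comp exp Fi). apply is_derive_exp. apply Fi_d.
  rewrite alpha_eq by lra. unfold fc. rewrite cl_id by lra. simpl. unfold scal; simpl; unfold mult; simpl. ring.
Qed.

Lemma D_alphabar t : 0 < t < 1 -> is_derive (alphabar f) t (f t * alphabar f t).
Proof.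
  intros Ht. apply (is_derive_ext_loc (fun s => exp (- RInt fc s 1))).
  { apply loc01; auto. intros; unfold alphabar; rewrite RInt_f_fc; auto; lra. }
  eapply is_derive_eq. apply (is_derive_comp exp (fun s => - RInt fc s 1)). apply is_derive_exp.
  apply (is_derive_opp (fun s => RInt fc s 1)).
  apply (is_derive_RInt' fc (fun s => RInt fc s 1) t 1). apply filter_forall. intros; apply (@RInt_correct R_CompleteNormedModule), fc_ex. apply fc_cont.
  unfold alphabar. rewrite RInt_f_fc by lra. unfold fc. rewrite cl_id by lra.
  simpl. unfold scal, opp; simpl; unfold mult; simpl. ring.
Qed.

Lemma D_sig2 t : 0 < t < 1 -> is_derive (sig2 f g) t (g t ^ 2 / alpha f t ^ 2).
Proof.
  intros Ht. apply (is_derive_ext_loc (fun s => RInt hc 0 s)).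
  { apply loc01; auto. intros; rewrite sig2_eq; auto; lra. }
  rewrite h_eq by lra.
  apply (is_derive_RInt hc (fun s => RInt hc 0 s) 0 t). apply filter_forall. intros; apply (@RInt_correct R_CompleteNormedModule), hc_ex. apply hc_cont.
Qed.

Lemma D_sigbar2 t : 0 < t < 1 -> is_derive (sigbar2 f g) t (- (g t ^ 2 / alpha f t ^ 2)).
Proof.
  intros Ht. apply (is_derive_ext_loc (fun s => RInt hc s 1)).
  { apply loc01; auto. intros; rewrite sigbar2_eq; auto; lra. }
  rewrite h_eq by lra.
  apply (is_derive_RInt' hc (fun s => RInt hc s 1) t 1). apply filter_forall. intros; apply (@RInt_correct R_CompleteNormedModule), hc_ex. apply hc_cont.
Qed.

End Conc.

Lemma Rpower_pos a b : 0 < Rpower a b.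
Proof. unfold Rpower; apply exp_pos. Qed.

Lemma gauss_Phi d L m v x :
  Rpower (2 * PI * v) (INR d / 2) * exp L * gauss d m v x = exp (L + - sqnorm d (vsub x m) / (2 * v)).
Proof.
  unfold gauss. rewrite exp_plus. field. apply Rgt_not_eq, Rpower_pos.
Qed.

Lemma prod_gauss d L1 L2 m1 m2 v1 v2 e2 (x0 : vec) :
  0 < v1 -> 0 < v2 -> 0 < e2 -> / v1 + / v2 = / e2 ->
  (forall i, m1 i / v1 + m2 i / v2 = x0 i / e2) ->
  exists k, 0 < k /\ forall x,
    exp (L1 + - sqnorm d (vsub x m1) / (2 * v1)) * exp (L2 + - sqnorm d (vsub x m2) / (2 * v2))
    = k * gauss d x0 e2 x.
Proof.
  intros H1 H2 H3 Hp Hm.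
  set (cst := fun i => x0 i ^ 2 / (2 * e2) - m1 i ^ 2 / (2 * v1) - m2 i ^ 2 / (2 * v2)).
  exists (Rpower (2 * PI * e2) (INR d / 2) * exp (L1 + L2 + fsum d cst)).
  split. { apply Rmult_lt_0_compat; [apply Rpower_pos|apply exp_pos]. }
  intros x. rewrite gauss_Phi, <- exp_plus. f_equal.
  unfold sqnorm.
  transitivity (L1 + L2 + fsum d (fun i => (- / (2 * v1)) * (vsub x m1 i ^ 2) + (- / (2 * v2)) * (vsub x m2 i ^ 2))).
  { rewrite fsum_lin2. field. lra. }
  transitivity (L1 + L2 + fsum d (fun i => 1 * cst i + (- / (2 * e2)) * (vsub x x0 i ^ 2))).
  2:{ rewrite fsum_lin2. field. lra. }
  f_equal. apply fsum_ext. intros i _. unfold vsub, cst.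
  apply Rminus_diag_uniq.
  transitivity (- (x i) ^ 2 / 2 * (/ v1 + / v2 - / e2) + x i * (m1 i / v1 + m2 i / v2 - x0 i / e2)).
  { field. lra. }
  rewrite Hp, Hm. ring.
Qed.

Lemma gauss_cont d (m : R -> vec) (v : R -> R) x s0 :
  (forall i, (i < d)%nat -> continuous (fun s => m s i) s0) -> continuous v s0 -> 0 < v s0 ->
  continuous (fun s => gauss d (m s) (v s) x) s0.
Proof.
  intros Hm Hv Hv0. unfold gauss.
  apply (continuous_mult (fun s => / Rpower (2 * PI * v s) (INR d / 2))
                         (fun s => exp (- sqnorm d (vsub x (m s)) / (2 * v s)))).
  - apply (continuous_comp v (fun y => / Rpower (2 * PI * y) (INR d / 2))); auto.
    apply ex_derive_cont_R. unfold Rpower. auto_derive.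
    split; [|split; [apply Rgt_not_eq, exp_pos|auto]]. apply Rmult_lt_0_compat; auto. pose proof PI_RGT_0; lra.
  - apply (continuous_comp (fun s => - sqnorm d (vsub x (m s)) / (2 * v s)) exp).
    2:{ apply ex_derive_cont_R. eexists; apply is_derive_exp. }
    apply (continuous_ext_R (fun s => mult (- sqnorm d (vsub x (m s))) (/ (2 * v s)))).
    { intros; reflexivity. }
    apply (continuous_mult (fun s => - sqnorm d (vsub x (m s))) (fun s => / (2 * v s))).
    + apply (continuous_opp (fun s => sqnorm d (vsub x (m s)))).
      unfold sqnorm. apply (continuous_fsum d (fun s i => vsub x (m s) i ^ 2)).
      intros i Hi. unfold vsub.
      apply (continuous_comp (fun s => m s i) (fun y => (x i - y) ^ 2)); auto.
      apply ex_derive_cont_R. auto_derive. auto.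
    + apply (continuous_comp v (fun y => / (2 * y))); auto.
      apply ex_derive_cont_R. auto_derive. lra.
Qed.

Lemma filterlim_right (F : R -> R) :
  continuous F 0 -> filterlim F (at_right 0) (locally (F 0)).
Proof.
  intros H. eapply filterlim_filter_le_1; [apply filter_le_within|]. exact H.
Qed.

Lemma sig_rel S e : 0 < S -> 0 < e ->
  0 < e ^ 2 + (sqrt (S ^ 2 + 4 * e ^ 4) - S) / 2 /\
  e ^ 2 * (2 * (e ^ 2 + (sqrt (S ^ 2 + 4 * e ^ 4) - S) / 2) + S) =
  (e ^ 2 + (sqrt (S ^ 2 + 4 * e ^ 4) - S) / 2) * ((e ^ 2 + (sqrt (S ^ 2 + 4 * e ^ 4) - S) / 2) + S).
Proof.
  intros HS He.
  assert (H0 : 0 <= S ^ 2 + 4 * e ^ 4) by (pose proof (pow2_ge_0 S); pose proof (pow2_ge_0 (e^2)); nra).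
  pose proof (sqrt_sqrt _ H0) as Hr. pose proof (sqrt_pos (S ^ 2 + 4 * e ^ 4)) as Hr0.
  set (r := sqrt (S ^ 2 + 4 * e ^ 4)) in *.
  assert (He4 : 0 < e ^ 4) by (apply pow_lt; auto).
  assert (HrS : S < r) by nra.
  split.
  - assert (0 < e ^ 2) by (apply pow_lt; auto). lra.
  - nra.
Qed.

Lemma alpha0 f : alpha f 0 = 1.
Proof. unfold alpha. rewrite RInt_point. apply exp_0. Qed.
Lemma alphabar1 f : alphabar f 1 = 1.
Proof. unfold alphabar. rewrite RInt_point. change (zero : R) with 0. rewrite Ropp_0. apply exp_0. Qed.
Lemma alphabar0 f : alphabar f 0 = / alpha f 1.
Proof. unfold alphabar, alpha. apply exp_Ropp. Qed.
Lemma sig2_0 f g : sig2 f g 0 = 0.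
Proof. unfold sig2. rewrite RInt_point. reflexivity. Qed.
Lemma sigbar2_1 f g : sigbar2 f g 1 = 0.
Proof. unfold sigbar2. rewrite RInt_point. reflexivity. Qed.
Lemma sigbar2_0 f g : sigbar2 f g 0 = sig2 f g 1.
Proof. reflexivity. Qed.

Lemma sigma2_0 f g : 0 < sig2 f g 1 -> sigma2 f g 0 = 0.
Proof.
  intros H. unfold sigma2. replace (sig2 f g 1 ^ 2 + 4 * 0 ^ 4) with (sig2 f g 1 ^ 2) by ring.
  rewrite sqrt_pow2 by lra. simpl. lra.
Qed.

Lemma sigma2_cont f g : 0 < sig2 f g 1 -> continuous (sigma2 f g) 0.
Proof.
  intros H. apply ex_derive_cont_R. unfold sigma2. auto_derive.
  nra.
Qed.

Lemma alg (s S E a u w : R) : 0 < s -> 0 < S -> 0 < a -> E * (2*s+S) = s*(s+S) ->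
 (/ (s + S) + / s = / E) /\
 ((/a * (w + s/S*(w - a*u))) / (s+S) + (u + s/S*(u - /a*w)) / s = u / E) /\
 (/ (a^2*s) + / (a^2*s + a^2*S) = / (a^2*E)) /\
 ((w + s/S*(w - a*u)) / (a^2*s) + (a * (u + s/S*(u - /a*w))) / (a^2*s + a^2*S) = w / (a^2*E)).
Proof.
  intros Hs HS Ha Hr.
  assert (HE : E = s * (s + S) / (2 * s + S)).
  { apply (Rmult_eq_reg_r (2 * s + S)); [rewrite Hr; field|]; lra. }
  assert (Ha2 : 0 < a ^ 2) by (apply pow_lt; lra).
  assert (0 < a^2 * s) by nra. assert (0 < a^2*S) by nra.
  subst E. repeat split; field; repeat split; try lra; nra.
Qed.

Ltac rring := match goal with |- ?a = ?b => change (@eq R a b); ring end.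

Lemma is_derive_ext_R (f g : R -> R) x l : (forall t, f t = g t) -> is_derive f x l -> is_derive g x l.
Proof. apply is_derive_ext. Qed.

Lemma sb_eq d f g (F G : R -> vec -> R) : (forall t x, F t x = G t x) ->
  solves_backward d f g G -> solves_backward d f g F.
Proof.
  intros H. replace F with G; auto. apply functional_extensionality; intro t.
  apply functional_extensionality; intro x. auto.
Qed.
Lemma sf_eq d f g (F G : R -> vec -> R) : (forall t x, F t x = G t x) ->
  solves_forward d f g G -> solves_forward d f g F.
Proof.
  intros H. replace F with G; auto. apply functional_extensionality; intro t.
  apply functional_extensionality; intro x. auto.
Qed.

Theorem lemma1 (d : nat) (f g : R -> R) (x0 x1 : vec)
  (hf : forall t, 0 <= t <= 1 -> continuous f t)
  (hg : forall t, 0 <= t <= 1 -> continuous g t)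
  (hsig : 0 < sig2 f g 1) :
  (forall eps, 0 < eps ->
     exists c ch : R -> R,
       (forall t, 0 < c t) /\ (forall t, 0 < ch t) /\
       solves_backward d f g (fun t x => c t * PsiE d f g x0 x1 eps t x) /\
       solves_forward d f g (fun t x => ch t * PsihatE d f g x0 x1 eps t x) /\
       (exists k, 0 < k /\ forall x,
          (c 0 * PsiE d f g x0 x1 eps 0 x) * (ch 0 * PsihatE d f g x0 x1 eps 0 x)
          = k * gauss d x0 (eps ^ 2) x) /\
       (exists k, 0 < k /\ forall x,
          (c 1 * PsiE d f g x0 x1 eps 1 x) * (ch 1 * PsihatE d f g x0 x1 eps 1 x)
          = k * gauss d x1 (alpha f 1 ^ 2 * eps ^ 2) x)) /\
  (forall t, 0 <= t <= 1 -> 0 < sig2 f g t -> forall x,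
     filterlim (fun eps => PsihatE d f g x0 x1 eps t x) (at_right 0)
               (locally (Psihat0 d f g x0 t x))) /\
  (forall t, 0 <= t <= 1 -> 0 < sigbar2 f g t -> forall x,
     filterlim (fun eps => PsiE d f g x0 x1 eps t x) (at_right 0)
               (locally (Psi0 d f g x1 t x))).
Proof.
  split; [|split].
  2:{ intros t Ht Hs x.
    replace (Psihat0 d f g x0 t x) with ((fun e => PsihatE d f g x0 x1 e t x) 0).
    2:{ unfold PsihatE, Psihat0. rewrite sigma2_0 by auto. f_equal.
        - apply functional_extensionality; intro i. cbv [vscale avec vadd vsub].
          rewrite sigma2_0 by auto. unfold Rdiv. ring.
        - ring. }
    apply filterlim_right. unfold PsihatE.
    apply (gauss_cont d (fun e => vscale (alpha f t) (avec f g x0 x1 e))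
             (fun e => alpha f t ^ 2 * sigma2 f g e + alpha f t ^ 2 * sig2 f g t)).
    - intros i _. cbv [vscale avec vadd vsub].
      apply (continuous_comp (sigma2 f g) (fun y => alpha f t * (x0 i + y / sig2 f g 1 * (x0 i - / alpha f 1 * x1 i)))).
      apply sigma2_cont; auto.
      apply ex_derive_cont_R. auto_derive. lra.
    - apply (continuous_comp (sigma2 f g) (fun y => alpha f t ^ 2 * y + alpha f t ^ 2 * sig2 f g t)).
      apply sigma2_cont; auto.
      apply ex_derive_cont_R. auto_derive. auto.
    - rewrite sigma2_0 by auto. pose proof (alpha_pos f t). 
      assert (0 < alpha f t ^ 2) by (apply pow_lt; auto). nra. }
  2:{ intros t Ht Hs x.
    replace (Psi0 d f g x1 t x) with ((fun e => PsiE d f g x0 x1 e t x) 0).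
    2:{ unfold PsiE, Psi0. rewrite sigma2_0 by auto. f_equal.
        - apply functional_extensionality; intro i. cbv [vscale bvec vadd vsub].
          rewrite sigma2_0 by auto. unfold Rdiv. ring.
        - ring. }
    apply filterlim_right. unfold PsiE.
    apply (gauss_cont d (fun e => vscale (alphabar f t) (bvec f g x0 x1 e))
             (fun e => alpha f t ^ 2 * sigma2 f g e + alpha f t ^ 2 * sigbar2 f g t)).
    - intros i _. cbv [vscale bvec vadd vsub].
      apply (continuous_comp (sigma2 f g) (fun y => alphabar f t * (x1 i + y / sig2 f g 1 * (x1 i - alpha f 1 * x0 i)))).
      apply sigma2_cont; auto.
      apply ex_derive_cont_R. auto_derive. lra.
    - apply (continuous_comp (sigma2 f g) (fun y => alpha f t ^ 2 * y + alpha f t ^ 2 * sigbar2 f g t)).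
      apply sigma2_cont; auto.
      apply ex_derive_cont_R. auto_derive. auto.
    - rewrite sigma2_0 by auto. pose proof (alpha_pos f t). 
      assert (0 < alpha f t ^ 2) by (apply pow_lt; auto). nra. }

  intros eps Heps.
  destruct (sig_rel (sig2 f g 1) eps hsig Heps) as [Hs Hrel].
  change (eps ^ 2 + (sqrt (sig2 f g 1 ^ 2 + 4 * eps ^ 4) - sig2 f g 1) / 2) with (sigma2 f g eps) in Hs, Hrel.
  pose (vb := fun t => alpha f t ^ 2 * sigma2 f g eps + alpha f t ^ 2 * sigbar2 f g t).
  pose (mb := fun t => vscale (alphabar f t) (bvec f g x0 x1 eps)).
  pose (Lb := fun t => - (INR d / 2) * ln (sigma2 f g eps + sigbar2 f g t)).
  pose (vf := fun t => alpha f t ^ 2 * sigma2 f g eps + alpha f t ^ 2 * sig2 f g t).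
  pose (mf := fun t => vscale (alpha f t) (avec f g x0 x1 eps)).
  pose (Lf := fun t => - (INR d / 2) * ln (vf t)).
  assert (Hc : forall t x, (Rpower (2 * PI * vb t) (INR d / 2) * exp (Lb t)) * PsiE d f g x0 x1 eps t x = Phi d Lb mb vb t x)
    by (intros; apply gauss_Phi).
  assert (Hch : forall t x, (Rpower (2 * PI * vf t) (INR d / 2) * exp (Lf t)) * PsihatE d f g x0 x1 eps t x = Phi d Lf mf vf t x)
    by (intros; apply gauss_Phi).
  exists (fun t => Rpower (2 * PI * vb t) (INR d / 2) * exp (Lb t)),
         (fun t => Rpower (2 * PI * vf t) (INR d / 2) * exp (Lf t)).
  split; [intros; apply Rmult_lt_0_compat; [apply Rpower_pos|apply exp_pos]|].
  split; [intros; apply Rmult_lt_0_compat; [apply Rpower_pos|apply exp_pos]|].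
  split.
  { apply (sb_eq _ _ _ _ (fun t x => Phi d Lb mb vb t x)); [intros; apply Hc|].
    apply back_Phi. intros t Ht. assert (Ht' : 0 <= t <= 1) by lra.
    pose proof (alpha_pos f t) as Ha. pose proof (sigbar2_pos f g hf hg t Ht') as Hsb.
    assert (Ha2 : 0 < alpha f t ^ 2) by (apply pow_lt; auto).
    assert (Hvb : 0 < vb t) by (unfold vb; nra).
    split; [exact Hvb|]. split.
    - unfold Lb. eapply is_derive_eq.
      apply (is_derive_scal (fun y => ln (sigma2 f g eps + sigbar2 f g y))).
      apply (is_derive_comp ln (fun y => sigma2 f g eps + sigbar2 f g y)).
      apply is_derive_ln. lra.
      apply (is_derive_plus (fun _ => sigma2 f g eps) (sigbar2 f g)). apply is_derive_const. apply D_sigbar2; auto.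
      unfold vb, scal, plus, zero; simpl; unfold mult; simpl. field. repeat split; try lra; nra.
    - split.
      + intros i. unfold mb, vscale.
        apply (is_derive_ext_R (fun y => bvec f g x0 x1 eps i * alphabar f y)); [intros; ring|].
        eapply is_derive_eq. apply is_derive_scal. apply D_alphabar; auto. rring.
      + unfold vb. apply (is_derive_ext_R (fun y => alpha f y ^ 2 * (sigma2 f g eps + sigbar2 f g y))); [intros; ring|].
        eapply is_derive_eq. apply (is_derive_mult (fun y => alpha f y ^ 2) (fun y => sigma2 f g eps + sigbar2 f g y)).
        apply (is_derive_pow (alpha f) 2). apply D_alpha; auto.
        apply (is_derive_plus (fun _ => sigma2 f g eps) (sigbar2 f g)). apply is_derive_const. apply D_sigbar2; auto.
        intros; apply Rmult_comm.
        simpl. unfold plus, mult, zero; simpl. field. repeat split; try lra; nra. }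
  split.
  { apply (sf_eq _ _ _ _ (fun t x => Phi d Lf mf vf t x)); [intros; apply Hch|].
    apply fwd_Phi. intros t Ht. assert (Ht' : 0 <= t <= 1) by lra.
    pose proof (alpha_pos f t) as Ha. pose proof (sig2_pos f g hf hg t Ht') as Hsb.
    assert (Ha2 : 0 < alpha f t ^ 2) by (apply pow_lt; auto).
    assert (Hvf : 0 < vf t) by (unfold vf; nra).
    assert (Hvfd : is_derive vf t (2 * f t * vf t + g t ^ 2)).
    { unfold vf. apply (is_derive_ext_R (fun y => alpha f y ^ 2 * (sigma2 f g eps + sig2 f g y))); [intros; ring|].
        eapply is_derive_eq. apply (is_derive_mult (fun y => alpha f y ^ 2) (fun y => sigma2 f g eps + sig2 f g y)).
        apply (is_derive_pow (alpha f) 2). apply D_alpha; auto.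
        apply (is_derive_plus (fun _ => sigma2 f g eps) (sig2 f g)). apply is_derive_const. apply D_sig2; auto.
        intros; apply Rmult_comm.
        simpl. unfold plus, mult, zero; simpl. field. repeat split; try lra; nra. }
    split; [exact Hvf|]. split.
    - unfold Lf. eapply is_derive_eq.
      apply (is_derive_scal (fun y => ln (vf y))).
      apply (is_derive_comp ln vf). apply is_derive_ln. lra. exact Hvfd.
      unfold scal; simpl; unfold mult; simpl. field. repeat split; try lra; nra.
    - split; [|exact Hvfd].
      intros i. unfold mf, vscale.
      apply (is_derive_ext_R (fun y => avec f g x0 x1 eps i * alpha f y)); [intros; ring|].
      eapply is_derive_eq. apply is_derive_scal. apply D_alpha; auto. rring. }
  pose proof (alpha_pos f 1) as Ha1.
  destruct (alg (sigma2 f g eps) (sig2 f g 1) (eps ^ 2) (alpha f 1) 0 0 Hs hsig Ha1 Hrel) as (A1 & _ & A3 & _).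
  assert (He2 : 0 < eps ^ 2) by (apply pow_lt; auto).
  split.
  { destruct (prod_gauss d (Lb 0) (Lf 0) (mb 0) (mf 0) (vb 0) (vf 0) (eps ^ 2) x0) as [k [Hk HH]].
    - unfold vb. rewrite alpha0, sigbar2_0. lra.
    - unfold vf. rewrite alpha0, sig2_0. lra.
    - exact He2.
    - unfold vb, vf. rewrite alpha0, sigbar2_0, sig2_0. rewrite <- A1. f_equal; f_equal; ring.
    - intros i. destruct (alg (sigma2 f g eps) (sig2 f g 1) (eps ^ 2) (alpha f 1) (x0 i) (x1 i) Hs hsig Ha1 Hrel) as (_ & A2 & _).
      unfold vb, vf, mb, mf. cbv [vscale avec bvec vadd vsub].
      rewrite alpha0, alphabar0, sigbar2_0, sig2_0. rewrite <- A2. field.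
      split; lra.
    - exists k. split; [exact Hk|]. intros x. cbv beta. rewrite Hc, Hch. apply HH. }
  { destruct (prod_gauss d (Lb 1) (Lf 1) (mb 1) (mf 1) (vb 1) (vf 1) (alpha f 1 ^ 2 * eps ^ 2) x1) as [k [Hk HH]].
    - unfold vb. rewrite sigbar2_1. assert (0 < alpha f 1 ^ 2) by (apply pow_lt; auto). nra.
    - unfold vf. assert (0 < alpha f 1 ^ 2) by (apply pow_lt; auto). nra.
    - assert (0 < alpha f 1 ^ 2) by (apply pow_lt; auto). nra.
    - unfold vb, vf. rewrite sigbar2_1. rewrite <- A3. f_equal; f_equal; ring.
    - intros i. destruct (alg (sigma2 f g eps) (sig2 f g 1) (eps ^ 2) (alpha f 1) (x0 i) (x1 i) Hs hsig Ha1 Hrel) as (_ & _ & _ & A4).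
      unfold vb, vf, mb, mf. cbv [vscale avec bvec vadd vsub].
      rewrite alphabar1, sigbar2_1. rewrite <- A4. field.
      assert (0 < alpha f 1 ^ 2) by (apply pow_lt; auto). split; nra.
    - exists k. split; [exact Hk|]. intros x. cbv beta. rewrite Hc, Hch. apply HH. }
Qed.
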